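(* Let $V$ and $W$ be two-dimensional inner-product spaces, and let $x,y\in V$ be linearly independent vectors of equal length, with $\theta$ the angle between them. Then for every linear map $A\in\mathrm{Hom}(V,W)$, \[ |A|^2\le\frac{2}{1-\cos\theta}\left(\frac{|Ax|^2}{|x|^2}+\frac{|Ay|^2}{|y|^2}+\frac{|A(x+y)|^2}{|x+y|^2}\right). \]
   Context: $|A|$ denotes the Frobenius (Hilbert–Schmidt) norm of $A$ with respect to the inner products on $V$ and $W$. *)

(* Defs.v *)
From HB Require Import structures.
From mathcomp Require Import all_boot all_order all_algebra.
From mathcomp Require Import all_classical all_reals.
From mathcomp Require Import reals trigo.
Set Implicit Arguments. Unset Strict Implicit. Unset Printing Implicit Defensive.
Import Order.TTheory GRing.Theory Num.Theory.
Local Open Scope ring_scope.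

(* A two-dimensional real inner-product space is modelled (via an orthonormal
   basis) by row vectors 'rV[R]_2 with the standard dot product; a linear map
   V -> W is a matrix acting on row vectors: A x := x *m A. *)
Definition dotv (R : realType) (n : nat) (u v : 'rV[R]_n) : R := (u *m v^T) 0 0.
Definition normv (R : realType) (n : nat) (u : 'rV[R]_n) : R := Num.sqrt (dotv u u).
(* Frobenius (Hilbert-Schmidt) norm; in orthonormal bases it is the sqrt of the
   sum of the squared entries. *)
Definition frob (R : realType) (m n : nat) (A : 'M[R]_(m, n)) : R :=
  Num.sqrt (\sum_(i < m) \sum_(j < n) A i j ^+ 2).

(* Main.v *)
Require Import Defs.
From HB Require Import structures.
From mathcomp Require Import all_boot all_order all_algebra.
From mathcomp Require Import all_classical all_reals.
From mathcomp Require Import reals trigo.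
From mathcomp Require Import ring lra.
Import Order.TTheory GRing.Theory Num.Theory.
Local Open Scope ring_scope.

Lemma det22 (R : comNzRingType) (M : 'M[R]_2) : \det M = M 0 0 * M 1 1 - M 0 1 * M 1 0.
Proof.
rewrite (expand_det_row _ 0) !big_ord_recl big_ord0 /cofactor !det_mx11 !mxE /=.
have L1 : lift (0 : 'I_2) (0 : 'I_1) = 1 by apply/val_inj.
have L2 : lift (ord0 : 'I_2) (ord0 : 'I_1) = 1 by apply/val_inj.
have L3 : lift (lift (ord0 : 'I_2) (ord0 : 'I_1)) (0 : 'I_1) = 0 by apply/val_inj.
rewrite ?L3 ?L1 ?L2 /= expr0 expr1 addr0 mul1r mulN1r mulrN.
by [].
Qed.
Lemma dot2 (R : realType) (u v : 'rV[R]_2) : dotv u v = u 0 0 * v 0 0 + u 0 1 * v 0 1.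
Proof. rewrite /dotv !mxE !big_ord_recl big_ord0 !mxE /= addr0.
have L2 : lift (ord0 : 'I_2) (ord0 : 'I_1) = 1 by apply/val_inj.
by rewrite L2. Qed.
Lemma mul2 (R : realType) (u : 'rV[R]_2) (A : 'M[R]_2) j : (u *m A) 0 j = u 0 0 * A 0 j + u 0 1 * A 1 j.
Proof. rewrite !mxE !big_ord_recl big_ord0 /= addr0.
have L2 : lift (ord0 : 'I_2) (ord0 : 'I_1) = 1 by apply/val_inj.
by rewrite L2. Qed.
Lemma frob2 (R : realType) (A : 'M[R]_2) : frob A ^+ 2 = A 0 0 ^+ 2 + A 0 1 ^+ 2 + A 1 0 ^+ 2 + A 1 1 ^+ 2.
Proof. rewrite /frob sqr_sqrtr; last by apply: sumr_ge0 => i _; apply: sumr_ge0 => j _; apply: sqr_ge0.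
rewrite !big_ord_recl !big_ord0 /=.
have L2 : lift (ord0 : 'I_2) (ord0 : 'I_1) = 1 by apply/val_inj.
by rewrite L2 !addr0 !addrA.
Qed.
Lemma normv2 (R : realType) (u : 'rV[R]_2) : normv u ^+ 2 = dotv u u.
Proof. by rewrite /normv sqr_sqrtr // dot2 addr_ge0 // -expr2 sqr_ge0. Qed.
Lemma alg (R : realType) (F P Q s S g N M D2 : R) :
  0 < N -> D2 = N^+2 - g^+2 -> 0 < D2 -> S = P + Q + s *+ 2 -> 0 <= S -> 0 <= P -> 0 <= Q ->
  M = N *+ 2 + g *+ 2 -> F * D2 = N * (P + Q) - (g * s) *+ 2 ->
  F <= 2 / (1 - g / N) * (P / N + Q / N + S / M).
Proof.
move=> N0 HD D0 HS S0 P0 Q0 HM HF.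
have Hng : 0 < N - g /\ 0 < N + g.
  have : 0 < (N - g) * (N + g).
    by have -> : (N - g) * (N + g) = D2 by rewrite HD; ring.
  move=> H; split; nra.
case: Hng => H1 H2.
have Fe : F = (N * (P + Q) - (g * s) *+ 2) / D2.
  by rewrite -HF mulfK // gt_eqF.
have E : 2 / (1 - g / N) * (P / N + Q / N + S / M) =
   F + 2 * (P + Q + s) / (N - g).
  rewrite Fe HD HM HS; field.
  by rewrite !gt_eqF // -?HD //; lra.
rewrite E lerDl divr_ge0 //; last by lra.
nra.
Qed.
Lemma cm0 (R : realType) (x y : 'rV[R]_2) j : (col_mx x y : 'M_2) 0 j = x 0 j.
Proof. by rewrite -(col_mxEu x y 0 j); congr (col_mx x y _ j); apply/val_inj. Qed.
Lemma cm1 (R : realType) (x y : 'rV[R]_2) j : (col_mx x y : 'M_2) 1 j = y 0 j.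
Proof. by rewrite -(col_mxEd x y 0 j); congr (col_mx x y _ j); apply/val_inj. Qed.
Lemma detxy (R : realType) (x y : 'rV[R]_2) (Hfree : row_free (col_mx x y)) : x 0 0 * y 0 1 - x 0 1 * y 0 0 != 0.
Proof.
by move: Hfree; rewrite row_free_unit unitmxE unitfE det22 !cm0 !cm1.
Qed.
Theorem lemmaA2 (R : realType) (x y : 'rV[R]_2) (theta : R)
  (Hfree : row_free (col_mx x y))
  (Hlen : normv x = normv y)
  (Htheta : 0 <= theta <= pi)
  (Hcos : cos theta = dotv x y / (normv x * normv y))
  (A : 'M[R]_(2, 2)) :
  frob A ^+ 2 <=
    2 / (1 - cos theta) *
      (normv (x *m A) ^+ 2 / normv x ^+ 2
       + normv (y *m A) ^+ 2 / normv y ^+ 2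
       + normv ((x + y) *m A) ^+ 2 / normv (x + y) ^+ 2).
Proof.
set N := dotv x x.
set g := dotv x y.
set D := x 0 0 * y 0 1 - x 0 1 * y 0 0.
have Dnz : D != 0 by exact: detxy.
have Hy : dotv y y = N by rewrite /N -!normv2 Hlen.
have Hxy : normv x * normv y = N by rewrite -Hlen -expr2 normv2 /N.
have Lag : D ^+ 2 = dotv x x * dotv y y - g ^+ 2 by rewrite /D /g !dot2; ring.
have D0 : 0 < D ^+ 2 by rewrite lt_def sqr_ge0 andbT sqrf_eq0.
have N0 : 0 < N.
  have Nge : 0 <= N by rewrite /N -normv2 sqr_ge0.
  rewrite Hy in Lag.
  have : 0 < N * N by rewrite -(subrK (g ^+ 2) (N * N)) -Lag; apply: ltr_wpDr => //; exact: sqr_ge0.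
  by rewrite pmulr_rgt0 // ?lt_def ?Nge ?andbT //; apply/negP => /eqP H; move: Lag D0; rewrite H; nra.
rewrite Hcos Hxy !normv2 Hy -/N.
apply: (@alg R _ _ _ (dotv (x *m A) (y *m A)) _ g N _ (D ^+ 2)) => //.
- by rewrite Lag Hy.
- by rewrite !dot2 !mul2 !mxE; ring.
- by rewrite -normv2 sqr_ge0.
- by rewrite -normv2 sqr_ge0.
- by rewrite -normv2 sqr_ge0.
- have -> : dotv (x + y) (x + y) = dotv x x + dotv y y + g *+ 2.
    by rewrite /g !dot2 !mxE; ring.
  by rewrite Hy.
- have -> : frob A ^+ 2 * D ^+ 2 = dotv y y * dotv (x *m A) (x *m A) + dotv x x * dotv (y *m A) (y *m A) - g * dotv (x *m A) (y *m A) *+ 2.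
    by rewrite frob2 /D /g !dot2 !mul2; ring.
  by rewrite Hy -/N; ring.
Qed.
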